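(* If the diagonal gain matrix $\Theta=\texttt{diag}(\theta_1,\dots,\theta_n)$ is chosen large enough that $\theta_i > \zeta_{N_{d1},i} + \lambda_{3,i}^{-1} \zeta_{N_{d2},i}$ for every $i$, then $P(t) \geq 0$ for all $t \geq t_0$.
   Context: Consider a fully actuated multirotor with configuration $q=[p;\phi]\in\mathbb{R}^n$ ($n=6$; position $p$, Euler angles $\phi$) whose dynamics are written as $M(q)\ddot q = G(q)Av + h(q,\dot q) + d(t)$, where $M(q)=\texttt{blkdiag}(mI_3,Q^\top JQ)$ is symmetric, $G(q)=\texttt{blkdiag}(R,Q^\top)$, $A\in\mathbb{R}^{6\times 6}$ is the constant invertible rotor-thrust-to-wrench map, $v$ is the shifted rotor-thrust input with symmetric bound $-\overline v\le v\le \overline v$, and $d(t)$ is an external disturbance. For a vector $x$, $\operatorname{Tanh}(x)$ denotes the vector $[\tanh(x_1);\dots;\tanh(x_n)]$ and $\operatorname{Cosh}(x)$ denotes the diagonal matrix $\texttt{diag}(\cosh(x_1),\dots,\cosh(x_n))$. With desired trajectory $q_d(t)$, error variables are $e_1=q_d-q$, $e_2=\dot e_1+\Lambda_1\operatorname{Tanh}(e_1)+e_f$, $\dot e_f=-\Gamma_1 e_2+\operatorname{Tanh}(e_1)-\Gamma_2 e_f$, and the controller is $v=\Gamma_1\operatorname{Tanh}(z)$, $\dot z=\operatorname{Cosh}^2(z)\Gamma_1^{-1}A^{-1}G^{-1}\big(M\Gamma_1\{\Lambda_2\operatorname{Tanh}(e_2)+\Lambda_3 e_2+\Gamma_2 e_2\}+\Theta\operatorname{sgn}(e_2)-\dot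 G A v\big)$, with all of $\Lambda_1,\Lambda_2,\Lambda_3,\Gamma_1,\Gamma_2,\Theta$ positive definite diagonal gain matrices ($\lambda_{3,i}$ denotes the $i$-th diagonal entry of $\Lambda_3$). Define $r=\dot e_2+\Lambda_2\operatorname{Tanh}(e_2)+\Lambda_3 e_2$, $h_d=h(q_d,\dot q_d)$, and $N_d=\dot M\ddot q_d+M\dddot q_d-\dot h_d-\dot d$. It is assumed that $\zeta_{N_{d1},i}=\sup_t|N_{d,i}(t)|$ and $\zeta_{N_{d2},i}=\sup_t|\dot N_{d,i}(t)|$ exist (are finite) for each $i$. The function $P$ is defined by $\dot P=-r^\top(N_d-\Theta\operatorname{sgn}(e_2))$ with initial value $P(t_0)=\sum_{i=1}^n\theta_i|e_{2i}(t_0)|-e_2(t_0)^\top N_d(t_0)$. *)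

(* Defs.v *)
From HB Require Import structures.
From mathcomp Require Import all_boot all_order all_algebra.
From mathcomp Require Import all_classical all_reals all_analysis.
Set Implicit Arguments. Unset Strict Implicit. Unset Printing Implicit Defensive.
Import Order.TTheory GRing.Theory Num.Theory.
Import numFieldNormedType.Exports.
Local Open Scope classical_set_scope.
Local Open Scope ring_scope.

Definition tanh {R : realType} (x : R) : R :=
  (expR x - expR (- x)) / (expR x + expR (- x)).

(* dimension of the configuration space q = [p; phi] *)
Definition nq : nat := 6.

Definition zeta_Nd1 {R : realType} (Nd : 'I_nq -> R -> R) (i : 'I_nq) : R :=
  sup (range (fun t : R => `|Nd i t|)).
Definition zeta_Nd2 {R : realType} (Nd : 'I_nq -> R -> R) (i : 'I_nq) : R :=
  sup (range (fun t : R => `|derive1 (Nd i) t|)).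

Definition r_sig {R : realType} (lam2 lam3 : 'I_nq -> R) (e2 : 'I_nq -> R -> R)
  (i : 'I_nq) (t : R) : R :=
  derive1 (e2 i) t + lam2 i * tanh (e2 i t) + lam3 i * e2 i t.

Definition P_integrand {R : realType} (lam2 lam3 theta : 'I_nq -> R)
  (e2 Nd : 'I_nq -> R -> R) (t : R) : R :=
  \sum_(i < nq) r_sig lam2 lam3 e2 i t * (Nd i t - theta i * Num.sg (e2 i t)).

Definition P_init {R : realType} (theta : 'I_nq -> R) (e2 Nd : 'I_nq -> R -> R)
  (t0 : R) : R :=
  \sum_(i < nq) theta i * `|e2 i t0| - \sum_(i < nq) e2 i t0 * Nd i t0.

(* P is the solution of dP/dt = - r^T (N_d - Theta sgn(e2)), P(t0) = P_init,
   i.e. P(t) = P(t0) - int_{t0}^t r^T (N_d - Theta sgn(e2)) ds  (Lebesgue integral) *)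
Definition P_fun {R : realType} (lam2 lam3 theta : 'I_nq -> R)
  (e2 Nd : 'I_nq -> R -> R) (t0 t : R) : R :=
  P_init theta e2 Nd t0
  - Rintegral lebesgue_measure `[t0, t]%classic (P_integrand lam2 lam3 theta e2 Nd).

(* Main.v *)
Require Import Defs.
From HB Require Import structures.
From mathcomp Require Import all_boot all_order all_algebra.
From mathcomp Require Import all_classical all_reals all_analysis.
From mathcomp Require Import ring lra measurable_realfun.
Import Order.TTheory GRing.Theory Num.Theory.
Import numFieldNormedType.Exports.
Local Open Scope classical_set_scope.
Local Open Scope ring_scope.
Section S.
Context {R : realType}.
Notation mu := (@lebesgue_measure R).

Lemma sg_div (y : R) : Num.sg y = y / `|y|.
Proof.
have [->|y0] := eqVneq y 0; first by rewrite sgr0 mul0r.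
have [yp|yn] := ltrP 0 y.
  by rewrite gtr0_sg // gtr0_norm // divff.
rewrite ltr0_sg; last by rewrite lt_neqAle y0.
rewrite ler0_norm // invrN mulrN divff //.
Qed.

Lemma harm2_cvg : (fun n => harmonic n ^+ 2 : R) @ \oo --> 0.
Proof.
rewrite -[X in _ --> X](mulr0 (0:R)).
exact: (cvgM cvg_harmonic cvg_harmonic).
Qed.

Lemma sqrt_cvg (y : R) :
  (fun n => Num.sqrt (y ^+ 2 + harmonic n ^+ 2)) @ \oo --> `|y|.
Proof.
rewrite -sqrtr_sqr.
apply: (continuous_cvg _ (@sqrt_continuous R _)).
rewrite -[X in _ --> X]addr0.
apply: cvgD; [exact: cvg_cst| exact: harm2_cvg].
Qed.

Lemma sg_cvg (y : R) :
  (fun n => y / Num.sqrt (y ^+ 2 + harmonic n ^+ 2)) @ \oo --> Num.sg y.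
Proof.
have [->|y0] := eqVneq y 0.
  rewrite sgr0; under eq_fun do rewrite mul0r; exact: cvg_cst.
rewrite sg_div.
apply: (cvgM (cvg_cst y)).
apply: cvgV; first by rewrite normr_eq0.
exact: sqrt_cvg.
Qed.


Lemma der_cont (f : R -> R) x : derivable f x 1 -> {for x, continuous f}.
Proof. by move=> /derivable1_diffP /differentiable_continuous. Qed.

Lemma deriv_F (e : R -> R) (c : R) x : 0 < c -> derivable e x 1 ->
  is_derive x 1 (fun y => Num.sqrt (e y ^+ 2 + c))
    (derive1 e x * (e x / Num.sqrt (e x ^+ 2 + c))).
Proof.
move=> c0 de.
have gpos : 0 < e x ^+ 2 + c by rewrite ltr_wpDl ?sqr_ge0.
have dg : is_derive x 1 (fun y => e y ^+ 2 + c) ((2%:R * e x ^+ 1) *: derive1 e x + 0).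
  have h1 : is_derive x 1 (e ^+ 2) ((2%:R * e x ^+ 1) *: derive1 e x).
    apply: is_deriveX. rewrite derive1E. exact: derivableP.
  have h2 : is_derive x 1 (cst c : R -> R) 0 by exact: is_derive_cst.
  exact: (is_deriveD h1 h2).
have ds : is_derive (e x ^+ 2 + c) 1 Num.sqrt (2 * Num.sqrt (e x ^+ 2 + c))^-1.
  exact: is_derive1_sqrt.
have := @is_derive1_comp R Num.sqrt (fun y => e y ^+ 2 + c) x _ _ ds dg.
move=> H; apply: (@is_derive_eq _ _ _ (fun y => Num.sqrt (e y ^+ 2 + c)) x 1 _ _ H).
rewrite addr0 expr1 /GRing.scale /= invfM.
have sq0 : Num.sqrt (e x ^+ 2 + c) != 0 by rewrite gt_eqF // sqrtr_gt0.
field.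
by rewrite sq0.
Qed.

Lemma cont_sq (e : R -> R) c : 0 < c -> continuous e ->
  continuous (fun y => Num.sqrt (e y ^+ 2 + c)).
Proof.
move=> c0 ce x.
have h : {for x, continuous (fun y => e y ^+ 2 + c)}.
  rewrite /prop_for /continuous_at.
  have h2 : (fun y => e y ^+ 2) = (e \* e) by apply: funext => y; rewrite expr2.
  apply: cvgD; last exact: cvg_cst.
  rewrite h2 expr2; exact: (cvgM (ce x) (ce x)).
exact: (continuous_comp h (@sqrt_continuous R _)).
Qed.

Lemma FTC_n (e : R -> R) (c : R) a b : a < b -> 0 < c ->
  (forall x, derivable e x 1) -> continuous (derive1 e) ->
  (\int[mu]_(x in `[a, b]) (derive1 e x * (e x / Num.sqrt (e x ^+ 2 + c)))%:E
   = (Num.sqrt (e b ^+ 2 + c))%:E - (Num.sqrt (e a ^+ 2 + c))%:E)%E.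
Proof.
move=> ab c0 de ce'.
have ce : continuous e by move=> x; exact: der_cont.
have cs := @cont_sq e c c0 ce.
apply: (@continuous_FTC2 R _ (fun y => Num.sqrt (e y ^+ 2 + c))) => //.
- apply: continuous_subspaceT => x.
  rewrite /prop_for /continuous_at.
  apply: cvgM; first exact: ce'.
  apply: cvgM; first exact: ce.
  apply: cvgV; last exact: cs.
  by rewrite gt_eqF // sqrtr_gt0 ltr_wpDl ?sqr_ge0.
- split.
  + move=> x _; exact: (@ex_derive _ _ _ _ _ _ _ (@deriv_F e c x c0 (de x))).
  + exact: cvg_at_right_filter (cs a).
  + exact: cvg_at_left_filter (cs b).
- move=> x _; rewrite derive1E; exact: (@derive_val _ _ _ _ _ _ _ (@deriv_F e c x c0 (de x))).
Qed.

Lemma cont_fn (e : R -> R) c : 0 < c -> continuous e -> continuous (derive1 e) ->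
  continuous (fun x => derive1 e x * (e x / Num.sqrt (e x ^+ 2 + c))).
Proof.
move=> c0 ce ce' x.
have cs := @cont_sq e c c0 ce.
rewrite /prop_for /continuous_at.
apply: cvgM; first exact: ce'.
apply: cvgM; first exact: ce.
apply: cvgV; last exact: cs.
by rewrite gt_eqF // sqrtr_gt0 ltr_wpDl ?sqr_ge0.
Qed.

Lemma abs_FTC (e : R -> R) a b : a < b -> (forall x, derivable e x 1) ->
  continuous (derive1 e) ->
  mu.-integrable `[a, b] (EFin \o (fun x => derive1 e x * Num.sg (e x))) /\
  \int[mu]_(x in `[a, b]) (derive1 e x * Num.sg (e x)) = `|e b| - `|e a|.
Proof.
move=> ab de ce'.
have ce : continuous e by move=> x; exact: der_cont.
pose fr n (x : R) : R := derive1 e x * (e x / Num.sqrt (e x ^+ 2 + harmonic n ^+ 2)).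
pose f_ n (x : R) : \bar R := (fr n x)%:E.
pose f (x : R) : \bar R := (derive1 e x * Num.sg (e x))%:E.
pose g (x : R) : \bar R := (`|derive1 e x|)%:E.
have mD : measurable `[a, b] by exact: measurable_itv.
have h0 n : 0 < harmonic n ^+ 2 :> R by rewrite exprn_gt0 // harmonic_gt0.
have cfr n : continuous (fr n) by exact: cont_fn.
have mfr n : measurable_fun `[a, b] (fr n).
  apply: measurable_funS (continuous_measurable_fun (cfr n)) => //.
have mf_ n : measurable_fun `[a, b] (f_ n) by exact/measurable_EFinP.
have frc x : fr ^~ x @ \oo --> derive1 e x * Num.sg (e x).
  apply: cvgM; first exact: cvg_cst.
  exact: sg_cvg.
have mf : measurable_fun `[a, b] f.
  apply/measurable_EFinP.
  exact: (measurable_fun_cvg mfr (fun x _ => frc x)).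
have DC := @dominated_convergence _ _ R mu _ mD f_ f g mf_ mf.
lazymatch type of DC with forall _ : ?A, _ => have f_f : A end.
  apply: aeW => x _.
  apply: cvg_EFin; first by apply: nearW.
  exact: frc.
have ig : mu.-integrable `[a, b] g.
  apply: (continuous_compact_integrable (f := fun x => `|derive1 e x|)).
    exact: segment_compact.
  apply: continuous_subspaceT => x.
  exact: (continuous_comp (ce' x) (@norm_continuous _ _ _)).
have DC2 := DC f_f ig.
lazymatch type of DC2 with forall _ : ?A, _ => have f_g : A end.
  apply: aeW => x n _.
  rewrite /f_ /g abse_EFin lee_fin /fr normrM.
  rewrite -[leRHS]mulr1; apply: ler_wpM2l => //.
  rewrite normrM normfV.
  have sp : 0 < Num.sqrt (e x ^+ 2 + harmonic n ^+ 2) by rewrite sqrtr_gt0 ltr_wpDl ?sqr_ge0.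
  rewrite (gtr0_norm sp) ler_pdivrMr // mul1r.
  rewrite -sqrtr_sqr ler_sqrt; last by rewrite ltW // ltr_wpDl ?sqr_ge0.
  by rewrite lerDl ltW.
have [intf _ cvgint] := DC2 f_g.
split; first exact: intf.
have E n : (\int[mu]_(x in `[a, b]) f_ n x)%E =
   (Num.sqrt (e b ^+ 2 + harmonic n ^+ 2) - Num.sqrt (e a ^+ 2 + harmonic n ^+ 2))%:E.
  by rewrite /f_ /fr FTC_n.
have cvg2 : (fun n => (\int[mu]_(x in `[a, b]) f_ n x)%E) @ \oo --> (`|e b| - `|e a|)%:E.
  rewrite (funext E).
  apply: cvg_EFin; first by apply: nearW.
  apply: cvgB; exact: sqrt_cvg.
have := cvg_unique (@ereal_hausdorff R) cvgint cvg2.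
rewrite /Rintegral => ->.
done.
Qed.

Lemma int_le (c Y : R -> R) a b : a <= b -> continuous c ->
  (forall x, derivable Y x 1) -> (forall x, c x <= derive1 Y x) ->
  \int[mu]_(x in `[a, b]) c x <= Y b - Y a.
Proof.
move=> ab cc dY cY.
have [<-|ltab] := eqVneq a b.
  by rewrite set_itv1 Rintegral_set1 subrr.
have {}ltab : a < b by rewrite lt_neqAle ltab ab.
have ic : mu.-integrable `[a, b] (EFin \o c).
  apply: continuous_compact_integrable; first exact: segment_compact.
  exact: continuous_subspaceT.
pose F s := \int[mu]_(x in `[a, s]) c x.
have dF x : x \in `]a, b[ -> derivable F x 1 /\ derive1 F x = c x.
  rewrite in_itv /= => /andP[ax xb].
  exact: (continuous_FTC1_closed xb ic ax (cc x)).
have cF : {within `[a, b], continuous F}.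
  exact: (parameterized_integral_continuous ab ic).
have cYw : {within `[a, b], continuous Y}.
  apply: continuous_subspaceT => x; exact: der_cont.
have := @ger0_derive1_ndecr R (Y - F) a b.
have H1 : forall x, x \in `]a, b[ -> derivable (Y - F) x 1.
  move=> x /dF [dFx _]; exact: derivableB.
move=> /(_ H1) H.
have : (Y - F) a <= (Y - F) b.
  apply: H => //.
  - move=> x xab; have [dFx F'x] := dF x xab.
    rewrite derive1E deriveB // -!derive1E F'x subr_ge0; exact: cY.
  - move=> x; exact: (continuousB (cYw x) (cF x)).
rewrite /F !fctE /= set_itv1 Rintegral_set1 subr0.
move=> h; lra.
Qed.

Lemma le_sup_range (f : R -> R) s : has_ubound (range f) -> f s <= sup (range f).
Proof.
move=> ub; apply: sup_upper_bound; last by exists s.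
by split => //; exists (f 0), 0.
Qed.

Lemma Rintegral_sum (D : set R) n (f : 'I_n -> R -> R) : measurable D ->
  (forall i, mu.-integrable D (EFin \o f i)) ->
  \int[mu]_(x in D) (\sum_(i < n) f i x) = \sum_(i < n) \int[mu]_(x in D) f i x.
Proof.
move=> mD intf; rewrite /Rintegral.
under eq_integral do rewrite -sumEFin.
rewrite integral_sum //.
rewrite sum_fine //.
move=> i _; apply: integrable_fin_num => //; exact: intf.
Qed.

Lemma tanh_sg (x : R) : tanh x * Num.sg x = `|tanh x|.
Proof.
rewrite /tanh.
have dp : 0 < expR x + expR (- x) by rewrite addr_gt0 ?expR_gt0.
have ip : 0 < (expR x + expR (- x))^-1 by rewrite invr_gt0.
rewrite normrM (gtr0_norm ip) mulrAC; congr (_ * _).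
have [xp|xn|->] := ltrgtP x 0.
- have n0 : expR x - expR (- x) < 0 by rewrite subr_lt0 ltr_expR; lra.
  by rewrite ltr0_sg // mulrN1 ltr0_norm.
- have n0 : 0 < expR x - expR (- x) by rewrite subr_gt0 ltr_expR; lra.
  by rewrite gtr0_sg // mulr1 gtr0_norm.
- by rewrite sgr0 mulr0 oppr0 subrr normr0.
Qed.

Lemma cont_tanh : continuous (@tanh R).
Proof.
move=> x; rewrite /tanh /prop_for /continuous_at.
have cN : {for x, continuous (fun y : R => expR (- y))}.
  exact: (continuous_comp (@oppr_continuous R R x) (@continuous_expR R _)).
apply: cvgM; first by apply: cvgB; [exact: continuous_expR | exact: cN].
apply: cvgV; first by rewrite gt_eqF // addr_gt0 ?expR_gt0.
by apply: cvgD; [exact: continuous_expR | exact: cN].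
Qed.

Lemma cM (f g : R -> R) : continuous f -> continuous g -> continuous (fun x => f x * g x).
Proof. move=> cf cg x; rewrite /prop_for /continuous_at; apply: cvgM; [exact: cf | exact: cg]. Qed.
Lemma cD (f g : R -> R) : continuous f -> continuous g -> continuous (fun x => f x + g x).
Proof. move=> cf cg x; rewrite /prop_for /continuous_at; apply: cvgD; [exact: cf | exact: cg]. Qed.
Lemma cB (f g : R -> R) : continuous f -> continuous g -> continuous (fun x => f x - g x).
Proof. move=> cf cg x; rewrite /prop_for /continuous_at; apply: cvgB; [exact: cf | exact: cg]. Qed.
Lemma cC (a : R) : continuous (fun _ : R => a).
Proof. move=> x; exact: cvg_cst. Qed.
Lemma cN (f : R -> R) : continuous f -> continuous (fun x => `|f x|).
Proof. move=> cf x; exact: (continuous_comp (cf x) (@norm_continuous _ _ _)). Qed.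
Lemma cT (f : R -> R) : continuous f -> continuous (fun x => tanh (f x)).
Proof. move=> cf x; exact: (continuous_comp (cf x) (cont_tanh _)). Qed.

End S.

Theorem lemma1 (R : realType) (lam2 lam3 theta : 'I_nq -> R)
  (e2 Nd : 'I_nq -> R -> R) (t0 : R) :
  (forall i, 0 < lam2 i) -> (forall i, 0 < lam3 i) -> (forall i, 0 < theta i) ->
  (* e2 is continuously differentiable *)
  (forall i t, derivable (e2 i) t 1) -> (forall i, continuous (derive1 (e2 i))) ->
  (* N_d is differentiable, and N_d and its derivative are bounded *)
  (forall i t, derivable (Nd i) t 1) ->
  (forall i, has_ubound (range (fun t : R => `|Nd i t|))) ->
  (forall i, has_ubound (range (fun t : R => `|derive1 (Nd i) t|))) ->
  (* gain condition *)
  (forall i, zeta_Nd1 Nd i + (lam3 i)^-1 * zeta_Nd2 Nd i < theta i) ->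
  forall t, t0 <= t -> 0 <= P_fun lam2 lam3 theta e2 Nd t0 t.
Proof.
move=> l2 l3 th de ce' dN bN bN' gain t t0t.
have ce i : continuous (e2 i) by move=> x; exact: der_cont.
have cNd i : continuous (Nd i) by move=> x; exact: der_cont.
have hN i s : `|Nd i s| <= zeta_Nd1 Nd i.
  exact: (le_sup_range (fun t => `|Nd i t|) s (bN i)).
have hN' i s : `|derive1 (Nd i) s| <= zeta_Nd2 Nd i.
  exact: (le_sup_range (fun t => `|derive1 (Nd i) t|) s (bN' i)).
have z2 i : 0 <= zeta_Nd2 Nd i := le_trans (normr_ge0 _) (hN' i 0).
have gain' i : zeta_Nd1 Nd i * lam3 i + zeta_Nd2 Nd i < theta i * lam3 i.
  have := gain i; rewrite -(ltr_pM2r (l3 i)) mulrDl mulrAC mulVf ?gt_eqF // mul1r.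
  done.
have thN i s : `|Nd i s| <= theta i.
  have := gain i; have := hN i s.
  have : 0 <= (lam3 i)^-1 * zeta_Nd2 Nd i by rewrite mulr_ge0 // invr_ge0 ltW.
  lra.
have fin i s : 0 <= theta i * `|e2 i s| - e2 i s * Nd i s.
  rewrite subr_ge0; apply: le_trans (ler_norm _) _.
  by rewrite normrM mulrC ler_wpM2r.
have [<-|ltt] := eqVneq t0 t.
  rewrite /P_fun set_itv1 Rintegral_set1 subr0 /P_init -sumrB.
  by apply: sumr_ge0 => i _; exact: fin.
have {}ltt : t0 < t by rewrite lt_neqAle ltt t0t.
pose c i s := derive1 (e2 i) s * Nd i s + (lam2 i * tanh (e2 i s) + lam3 i * e2 i s) * Nd i s
   - theta i * (lam2 i * `|tanh (e2 i s)| + lam3 i * `|e2 i s|).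
pose k i s := derive1 (e2 i) s * Num.sg (e2 i s).
have cc i : continuous (c i).
  apply: cB; first apply: cD.
  - exact: cM.
  - apply: cM; last exact: cNd.
    apply: cD; apply: cM; [exact: cC | exact: cT | exact: cC | exact: ce].
  - apply: cM; first exact: cC.
    apply: cD; apply: cM; [exact: cC | apply: cN; exact: cT | exact: cC | apply: cN; exact: ce].
have mD : measurable `[t0, t] by exact: measurable_itv.
have ic i : (@lebesgue_measure R).-integrable `[t0, t] (EFin \o c i).
  apply: continuous_compact_integrable; first exact: segment_compact.
  exact: continuous_subspaceT.
have AK (i : 'I_nq) := @abs_FTC R (e2 i) t0 t ltt (de i) (ce' i).
have iF i : (@lebesgue_measure R).-integrable `[t0, t]
    (EFin \o (fun s => c i s - theta i * k i s)).
  have -> : EFin \o (fun s => c i s - theta i * k i s) =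
     ((EFin \o c i) \- (fun x => (theta i)%:E * (EFin \o k i) x))%E.
    by apply: funext => x; rewrite /= EFinB EFinM.
  apply: integrableB => //; apply: integrableZl => //; exact: (AK i).1.
have cle i : \int[lebesgue_measure]_(x in `[t0, t]) c i x
    <= e2 i t * Nd i t - e2 i t0 * Nd i t0.
  have := @int_le R (c i) (e2 i * Nd i) t0 t t0t (cc i).
  rewrite !fctE; apply.
  - by move=> x; apply: derivableM.
  - move=> x; rewrite derive1E deriveM // -!derive1E /GRing.scale /= /c.
    have F1 := ler_norm (tanh (e2 i x) * Nd i x).
    have F2 := ler_wpM2l (normr_ge0 (tanh (e2 i x))) (thN i x).
    have F3 := ler_norm (e2 i x * Nd i x).
    have F4 := ler_norm (- (e2 i x * derive1 (Nd i) x)).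
    have F5 : `|e2 i x| * (`|Nd i x| * lam3 i + `|derive1 (Nd i) x|)
        <= `|e2 i x| * (theta i * lam3 i).
      apply: ler_wpM2l => //.
      have := gain' i; have := hN i x; have := hN' i x.
      have := ler_wpM2r (ltW (l3 i)) (hN i x).
      lra.
    rewrite (normrM (tanh (e2 i x)) (Nd i x)) in F1.
    rewrite (normrM (e2 i x) (Nd i x)) in F3.
    rewrite normrN (normrM (e2 i x)) in F4.
    have G1 := ler_wpM2l (ltW (l2 i)) (le_trans F1 F2).
    have G2 := ler_wpM2l (ltW (l3 i)) F3.
    nra.
have E : P_integrand lam2 lam3 theta e2 Nd =1
    (fun s => \sum_(i < nq) (c i s - theta i * k i s)).
  move=> s; rewrite /P_integrand; apply: eq_bigr => i _.
  rewrite /r_sig /c /k -tanh_sg (normrEsg (e2 i s)).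
  ring.
rewrite /P_fun.
have -> : Rintegral lebesgue_measure `[t0, t]%classic (P_integrand lam2 lam3 theta e2 Nd)
    = \int[lebesgue_measure]_(x in `[t0, t]) (\sum_(i < nq) (c i x - theta i * k i x)).
  by apply: eq_Rintegral => x _; exact: E.
rewrite Rintegral_sum //.
rewrite /P_init -!sumrB; apply: sumr_ge0 => i _.
rewrite RintegralB //; last first.
  have -> : EFin \o (fun s => theta i * k i s) = (fun x => (theta i)%:E * (EFin \o k i) x)%E.
    by apply: funext => x; rewrite /= EFinM.
  apply: integrableZl => //; exact: (AK i).1.
rewrite RintegralZl //; last exact: (AK i).1.
rewrite (AK i).2.
have := cle i; have := fin i t.
rewrite mulrBr.
lra.
Qed.
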